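(* Let $G$ be a graph with connected components $G_1,\ldots,G_k$, where $G_1,\ldots,G_i$ ($i\geq 0$) are isolated vertices and $G_{i+1},\ldots,G_k$ each have at least two vertices. Then \[ \operatorname{cdim}(G)=\max\{i-1,0\}+\sum_{j=i+1}^{k}\operatorname{cdim}(G_j). \]
   Context: All graphs are finite, simple, undirected and nonempty. For distinct vertices $v,w$ of a graph $G$, $\kappa(v,w)=\kappa_G(v,w)$ is the maximum number of internally vertex-disjoint $v$–$w$ paths in $G$ (so $\kappa(v,w)=0$ if $v,w$ lie in different components; if $v,w$ are adjacent the edge $vw$ counts as one such path); by convention $\kappa(v,v)=\infty$. For an ordered vertex set $W=(w_1,\ldots,w_k)$, the connectivity representation of $v$ is $r_G(v,W)=[\kappa(v,w_1),\ldots,\kappa(v,w_k)]$. $W$ is resolving for $G$ if $r_G(v_1,W)=r_G(v_2,W)$ implies $v_1=v_2$ for all $v_1,v_2\in V(G)$ (the empty set is resolving for the one-vertex graph). A resolving set of minimum cardinality is a (connectivity) basis, and the connectivity dimension $\operatorname{cdim}(G)$ is the cardinality of a basis. *)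

(* Defs.v *)
From mathcomp Require Import all_boot.
From mathcomp Require Import boolp.

Set Implicit Arguments.
Unset Strict Implicit.
Unset Printing Implicit Defensive.

Section Graph.
Variables (T : finType) (e : rel T).

(* The graph induced on the vertex set V : {set T} (the edge relation e is
   assumed symmetric and irreflexive in the theorem). *)
Definition adjV (V : {set T}) : rel T :=
  fun x y => [&& x \in V, y \in V & e x y].

Definition vwpath (V : {set T}) (v w : T) (s : seq T) : bool :=
  if s is x :: rest then
    [&& x == v, x \in V, path (adjV V) x rest, last x rest == w & uniq s]
  else false.

Definition interior (v w : T) (s : seq T) : seq T :=
  [seq x <- s | (x != v) && (x != w)].

Definition int_disjoint (v w : T) (s1 s2 : seq T) : bool :=
  all (fun x => x \notin interior v w s2) (interior v w s1).

Definition has_k_paths (V : {set T}) (v w : T) (k : nat) : Prop :=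
  exists fam : seq (seq T),
    [/\ size fam = k, uniq fam, all (vwpath V v w) fam
      & pairwise (int_disjoint v w) fam].

(* kappa(v,w) in G[V]; None encodes infinity (the case v = w).  The maximum is
   taken over k <= #|T|, which bounds the number of such paths. *)
Definition kappa (V : {set T}) (v w : T) : option nat :=
  if v == w then None
  else Some (\max_(k < #|T|.+1 | `[< has_k_paths V v w k >]) (k : nat)).

(* Connectivity representation r(v, W) (W listed in the enumeration order). *)
Definition crep (V : {set T}) (v : T) (W : {set T}) : seq (option nat) :=
  [seq kappa V v w | w <- enum W].

Definition resolving (V : {set T}) (W : {set T}) : bool :=
  (W \subset V) &&
  [forall v1 in V, forall v2 in V, (crep V v1 W == crep V v2 W) ==> (v1 == v2)].

(* Connectivity dimension of G[V]: minimum size of a resolving set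
   (V itself is always resolving, so the default #|V| is harmless). *)
Definition cdim (V : {set T}) : nat :=
  \big[minn/#|V|]_(W : {set T} | resolving V W) #|W|.

Definition component (V : {set T}) (x : T) : {set T} :=
  [set y in V | connect (adjV V) x y].

Definition components (V : {set T}) : {set {set T}} :=
  [set component V x | x in V].

End Graph.

(* Main.v *)
Require Import Defs.
From mathcomp Require Import all_boot.
From mathcomp Require Import boolp.
Set Implicit Arguments. Unset Strict Implicit. Unset Printing Implicit Defensive.

Lemma adjT (T : finType) (e : rel T) : adjV e [set: T] =2 e.
Proof. by move=> x y; rewrite /adjV !in_setT. Qed.

Lemma path_closed (T : finType) (e : rel T) (C : {set T})
  (cl : forall x y, x \in C -> e x y -> y \in C) rest x :
  x \in C -> path (adjV e C) x rest = path (adjV e [set: T]) x rest.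
Proof.
elim: rest x => //= y rest IH x xC.
rewrite adjT /adjV xC /=; case exy: (e x y); last by rewrite !andbF.
by rewrite (cl _ _ xC exy) /= IH // (cl _ _ xC exy).
Qed.

Lemma vwpath_closed (T : finType) (e : rel T) (C : {set T})
  (cl : forall x y, x \in C -> e x y -> y \in C) v w :
  v \in C -> vwpath e C v w = vwpath e [set: T] v w.
Proof.
move=> vC; apply: funext => -[|x rest] //=.
case: eqP => //= ->; by rewrite vC in_setT path_closed.
Qed.

Lemma kappa_closed (T : finType) (e : rel T) (C : {set T})
  (cl : forall x y, x \in C -> e x y -> y \in C) v w :
  v \in C -> kappa e C v w = kappa e [set: T] v w.
Proof. by move=> vC; rewrite /kappa /has_k_paths vwpath_closed. Qed.

Lemma vwpath_connect (T : finType) (e : rel T) v w s :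
  vwpath e [set: T] v w s -> connect (adjV e [set: T]) v w.
Proof.
case: s => //= x rest /and5P[/eqP -> _ p /eqP <- _].
by apply/connectP; exists rest.
Qed.

Lemma kappa_disc (T : finType) (e : rel T) v w :
  v != w -> ~~ connect (adjV e [set: T]) v w -> kappa e [set: T] v w = Some 0.
Proof.
move=> /negbTE vw nc; rewrite /kappa vw; congr Some; apply/eqP.
rewrite -leqn0; apply/bigmax_leqP => k /asboolP [fam [sz _ al _]].
case: fam sz al => [<- //|s fam] _ /= /andP[/vwpath_connect c _].
by rewrite c in nc.
Qed.

Lemma kappa_conn (T : finType) (e : rel T) v w :
  v != w -> connect (adjV e [set: T]) v w ->
  exists k, kappa e [set: T] v w = Some k.+1.
Proof.
move=> vw /connectP [p pp lp]; rewrite /kappa (negbTE vw).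
set m := \max_(_ < _ | _) _.
have : 0 < m.
  have h1 : 1 < #|T|.+1 by rewrite ltnS; apply/card_gt0P; exists v.
  apply: leq_trans (leq_bigmax_cond (Ordinal h1) _) => //.
  apply/asboolP; move: lp; case: (shortenP pp) => p' pp' up' _ lp.
  exists [:: v :: p']; split => //=.
  by rewrite eqxx in_setT pp' -lp eqxx /= andbT; move: up'.
by case: m => // k _; exists k.
Qed.

Lemma crepP (T : finType) (e : rel T) V v1 v2 W :
  crep e V v1 W = crep e V v2 W <-> {in W, forall w, kappa e V v1 w = kappa e V v2 w}.
Proof.
rewrite /crep -eq_in_map; split => h w wW; apply: h; by rewrite ?mem_enum in wW *.
Qed.

Lemma resolvingP (T : finType) (e : rel T) V W :
  resolving e V W <->
  (W \subset V /\ forall v1 v2, v1 \in V -> v2 \in V ->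
     {in W, forall w, kappa e V v1 w = kappa e V v2 w} -> v1 = v2).
Proof.
rewrite /resolving; split.
  case/andP => sW /forallP h; split => // v1 v2 v1V v2V hw.
  move: (h v1); rewrite v1V /= => /forallP /(_ v2); rewrite v2V /=.
  by move/implyP => /(_ (introT eqP ((crepP _ _ _ _ _).2 hw))) /eqP.
case => sW h; rewrite sW; apply/forallP => v1; apply/implyP => v1V.
apply/forallP => v2; apply/implyP => v2V; apply/implyP => /eqP /crepP hw.
by apply/eqP; apply: h.
Qed.

Lemma kappa_None (T : finType) (e : rel T) V v w :
  (kappa e V v w == None) = (v == w).
Proof. by rewrite /kappa; case: (v =P w). Qed.

Lemma resolving_self (T : finType) (e : rel T) V : resolving e V V.
Proof.
apply/(proj2 (resolvingP _ _ _)); split; first exact: subxx.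
move=> v1 v2 v1V _ /(_ v1 v1V) h.
by apply/eqP; rewrite eq_sym -(kappa_None e V) -h kappa_None.
Qed.

Lemma bigmin_le_gen (I : eqType) (r : seq I) (P : pred I) (F : I -> nat) idx i0 :
  i0 \in r -> P i0 -> \big[minn/idx]_(i <- r | P i) F i <= F i0.
Proof.
elim: r => // x r IH; rewrite inE big_cons => /orP[/eqP <- -> | ir Pi].
  exact: geq_minl.
case: (P x); last exact: IH.
exact: leq_trans (geq_minr _ _) (IH ir Pi).
Qed.

Lemma cdim_le (T : finType) (e : rel T) V W :
  resolving e V W -> cdim e V <= #|W|.
Proof.
by move=> h; rewrite /cdim; apply: bigmin_le_gen => //; rewrite mem_index_enum.
Qed.

Lemma cdim_ex (T : finType) (e : rel T) V :
  exists2 W, resolving e V W & #|W| = cdim e V.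
Proof.
rewrite /cdim; apply: (big_ind (fun x => exists2 W, resolving e V W & #|W| = x)).
- by exists V => //; apply: resolving_self.
- move=> x y [W1 r1 <-] [W2 r2 <-]; case: (leqP #|W1| #|W2|) => h.
    by exists W1 => //; rewrite (minn_idPl h).
  by exists W2 => //; rewrite (minn_idPr (ltnW h)).
- by move=> W rW; exists W.
Qed.


Lemma in_comp (T : finType) (e : rel T) x y :
  (y \in component e [set: T] x) = connect (adjV e [set: T]) x y.
Proof. by rewrite inE in_setT. Qed.

Lemma comp_self (T : finType) (e : rel T) x : x \in component e [set: T] x.
Proof. by rewrite in_comp connect0. Qed.

Lemma comp_closed (T : finType) (e : rel T) z x y :
  x \in component e [set: T] z -> e x y -> y \in component e [set: T] z.
Proof.
rewrite !in_comp => c exy; apply: connect_trans c _; apply: connect1; by rewrite adjT.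
Qed.

Lemma comp_eq (T : finType) (e : rel T) (e_sym : symmetric e) x y :
  y \in component e [set: T] x -> component e [set: T] y = component e [set: T] x.
Proof.
have cs : connect_sym (adjV e [set: T]).
  by apply: sym_connect_sym => a b; rewrite !adjT e_sym.
rewrite in_comp => c; apply/setP => z; rewrite !in_comp.
by rewrite (same_connect cs c).
Qed.

Lemma comps_eq (T : finType) (e : rel T) (e_sym : symmetric e) C v :
  C \in components e [set: T] -> v \in C -> C = component e [set: T] v.
Proof.
by case/imsetP => x _ -> vC; rewrite (comp_eq e_sym vC).
Qed.

Lemma comps_partition (T : finType) (e : rel T) (e_sym : symmetric e) :
  partition (components e [set: T]) [set: T].
Proof.
apply: equivalence_partitionP => x y z _ _ _; split; first exact: connect0.
have cs : connect_sym (adjV e [set: T]).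
  by apply: sym_connect_sym => a b; rewrite !adjT e_sym.
by move=> c; rewrite (same_connect cs c).
Qed.

Lemma comps_closed (T : finType) (e : rel T) C :
  C \in components e [set: T] -> forall x y, x \in C -> e x y -> y \in C.
Proof. by case/imsetP => z _ -> x y; apply: comp_closed. Qed.

Lemma comps_out (T : finType) (e : rel T) (e_sym : symmetric e) C v w :
  C \in components e [set: T] -> v \in C -> w \notin C ->
  kappa e [set: T] v w = Some 0.
Proof.
move=> Cc vC wC; apply: kappa_disc.
  by apply: contraNneq wC => <-.
by rewrite -in_comp -(comps_eq e_sym Cc vC).
Qed.

Lemma resolving_restrict (T : finType) (e : rel T) (e_sym : symmetric e) W C :
  resolving e [set: T] W -> C \in components e [set: T] ->
  resolving e C (W :&: C).
Proof.
move=> /resolvingP [_ rW] Cc; apply/(proj2 (resolvingP _ _ _)); split.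
  exact: subsetIr.
move=> v1 v2 v1C v2C h; apply: rW; rewrite ?in_setT // => w wW.
case: (boolP (w \in C)) => wC.
  have := h w; rewrite inE wW wC => /(_ isT).
  by rewrite !(kappa_closed (comps_closed Cc)).
by rewrite !(comps_out e_sym Cc).
Qed.

Lemma sum_indic (T : finType) (A W : {set T}) :
  \sum_(x in A) (x \in W : nat) = #|A :&: W|.
Proof.
rewrite -sum1_card.
have -> : \sum_(x in A :&: W) 1 = \sum_(x in A | x \in W) 1.
  by apply: eq_bigl => x; rewrite inE.
by rewrite big_mkcondr; apply: eq_bigr => x _; case: (x \in W).
Qed.

Lemma card_split (T : finType) (e : rel T) (e_sym : symmetric e) (W : {set T}) :
  #|W| = \sum_(C in components e [set: T]) #|C :&: W|.
Proof.
have /and3P [/eqP cov triv _] := comps_partition e_sym.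
have : \sum_(x in cover (components e [set: T])) (x \in W : nat) =
  \sum_(C in components e [set: T]) \sum_(x in C) (x \in W : nat).
  exact: big_trivIset.
rewrite cov sum_indic setTI => ->.
by apply: eq_bigr => C _; rewrite sum_indic.
Qed.

Lemma comps_gt0 (T : finType) (e : rel T) C :
  C \in components e [set: T] -> 0 < #|C|.
Proof. by case/imsetP => z _ ->; apply/card_gt0P; exists z; apply: comp_self. Qed.

Lemma iso_J (T : finType) (e : rel T) (e_sym : symmetric e) (W : {set T}) :
  resolving e [set: T] W ->
  #|[set C in [set C in components e [set: T] | #|C| == 1] | C :&: W == set0]| <= 1.
Proof.
move=> /resolvingP [_ rW].
apply/card_le1_eqP => C1 C2; rewrite !inE.
move=> /andP[/andP[C1c /cards1P [u1 E1]] e1] /andP[/andP[C2c /cards1P [u2 E2]] e2].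
have nW : forall C u, C = [set u] -> C :&: W == set0 -> u \notin W.
  move=> C u -> /eqP/setP /(_ u); rewrite !inE eqxx /= => ->; done.
have u1W := nW _ _ E1 e1; have u2W := nW _ _ E2 e2.
have kz : forall C u w, C \in components e [set: T] -> C = [set u] -> u \notin W ->
    w \in W -> kappa e [set: T] u w = Some 0.
  move=> C u w Cc Eu uW wW; apply: (comps_out e_sym Cc); rewrite Eu ?set11 //.
  by rewrite inE; apply: contraNneq uW => <-.
have : u1 = u2.
  apply: rW; rewrite ?in_setT // => w wW.
  by rewrite (kz _ _ _ C1c E1 u1W wW) (kz _ _ _ C2c E2 u2W wW).
by move=> eu; rewrite E1 E2 eu.
Qed.

Lemma lower (T : finType) (e : rel T) (e_sym : symmetric e) (W : {set T}) :
  resolving e [set: T] W ->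
  (#|[set C in components e [set: T] | #|C| == 1]| - 1)
    + \sum_(C in components e [set: T] | 1 < #|C|) cdim e C <= #|W|.
Proof.
move=> rW; rewrite (card_split e_sym W).
rewrite (bigID (fun C : {set T} => #|C| == 1) (fun C => C \in components e [set: T])) /=.
apply: leq_add.
  set iso := [set C in components e [set: T] | #|C| == 1].
  have -> : \sum_(C in components e [set: T] | #|C| == 1) #|C :&: W|
          = \sum_(C in iso) #|C :&: W|.
    by apply: eq_bigl => C; rewrite inE.
  set J := [set C in iso | C :&: W == set0].
  have hJ : #|J| <= 1 := iso_J e_sym rW.
  rewrite (big_setID (A := iso) J) /=.
  apply: leq_trans (leq_addl _ _).
  apply: (@leq_trans #|iso :\: J|).
    rewrite -(cardsID J iso); have := subset_leq_card (subsetIr iso J).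
    by move: (#|iso :&: J|) => a ha; rewrite leq_subLR leq_add2r (leq_trans ha).
  rewrite -sum1_card; apply: leq_sum => C; rewrite !inE => /andP[nJ iC].
  by rewrite iC /= in nJ; rewrite card_gt0.
rewrite [X in _ <= X](eq_bigl (fun C => (C \in components e [set: T]) && (1 < #|C|))).
  apply: leq_sum => C /andP[Cc _]; rewrite setIC.
  exact: cdim_le (resolving_restrict e_sym rW Cc).
move=> C; case: (boolP (C \in components e [set: T])) => //= Cc.
by have := comps_gt0 Cc; case: #|C| => [|[|n]].
Qed.

Definition basis (T : finType) (e : rel T) (C : {set T}) : {set T} :=
  odflt set0 [pick W | resolving e C W && (#|W| == cdim e C)].

Lemma basisP (T : finType) (e : rel T) C :
  resolving e C (basis e C) /\ #|basis e C| = cdim e C.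
Proof.
rewrite /basis; case: pickP => [W /andP[r /eqP c] | h] //=.
have [W r c] := cdim_ex e C.
by have := h W; rewrite r c eqxx.
Qed.

Definition C0 (T : finType) (e : rel T) : {set T} :=
  odflt set0 [pick C in [set C in components e [set: T] | #|C| == 1]].

Definition fsel (T : finType) (e : rel T) (C : {set T}) : {set T} :=
  if 1 < #|C| then basis e C else if C == C0 e then set0 else C.

Definition Wc (T : finType) (e : rel T) : {set T} :=
  \bigcup_(C in components e [set: T]) fsel e C.

Lemma fsel_sub (T : finType) (e : rel T) C : fsel e C \subset C.
Proof.
rewrite /fsel; case: ifP => _.
  by have [/resolvingP [] ] := basisP e C.
by case: ifP => _; rewrite ?sub0set.
Qed.

Lemma in_Wc (T : finType) (e : rel T) (e_sym : symmetric e) v :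
  (v \in Wc e) = (v \in fsel e (component e [set: T] v)).
Proof.
apply/bigcupP/idP => [[C Cc vC] | h].
  by rewrite -(comps_eq e_sym Cc (subsetP (fsel_sub e C) _ vC)).
by exists (component e [set: T] v) => //; apply: imset_f.
Qed.

Lemma Wc_comp (T : finType) (e : rel T) (e_sym : symmetric e) C :
  C \in components e [set: T] -> C :&: Wc e = fsel e C.
Proof.
move=> Cc; apply/setP => x; rewrite inE in_Wc //.
case: (boolP (x \in C)) => xC /=.
  by rewrite -(comps_eq e_sym Cc xC).
by apply/esym/negP => /(subsetP (fsel_sub e C)); rewrite (negbTE xC).
Qed.

Lemma gt1_iff (T : finType) (e : rel T) C :
  C \in components e [set: T] -> (~~ (#|C| == 1)) = (1 < #|C|).
Proof. by move=> Cc; have := comps_gt0 Cc; case: #|C| => [|[|n]]. Qed.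

Lemma card_Wc (T : finType) (e : rel T) (e_sym : symmetric e) :
  #|Wc e| = (#|[set C in components e [set: T] | #|C| == 1]| - 1)
    + \sum_(C in components e [set: T] | 1 < #|C|) cdim e C.
Proof.
rewrite (card_split e_sym).
rewrite (bigID (fun C : {set T} => #|C| == 1) (fun C => C \in components e [set: T])) /=.
congr (_ + _); last first.
  apply: eq_big => C; first by case: (boolP (C \in components e [set: T])) => //= Cc; rewrite (gt1_iff Cc).
  case/andP => Cc h; rewrite Wc_comp // /fsel -(gt1_iff Cc) h.
  by have [_ ->] := basisP e C.
set iso := [set C in components e [set: T] | #|C| == 1].
rewrite (eq_big (fun C => C \in iso) (fun C => (C \in [set~ C0 e] : nat))).
- rewrite sum_indic -setDE (cardsD1 (C0 e) iso).
  rewrite /C0; case: pickP => [C iC | h]; first by rewrite iC add1n subn1.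
  have h0 : #|iso :\ set0| = 0.
    apply/eqP; rewrite cards_eq0; apply/eqP/setP => x; rewrite !inE.
    by have := h x; rewrite /= inE => ->; rewrite andbF.
  by rewrite h0 addn0; case: (_ \in _).
- by move=> C; rewrite inE.
move=> C /andP[Cc /eqP h1]; rewrite Wc_comp // /fsel h1 /= !inE.
by case: eqP => _ /=; rewrite ?cards0 ?h1.
Qed.

Lemma Wc_key (T : finType) (e : rel T) (e_sym : symmetric e) v1 v2 :
  v1 \notin Wc e -> v2 \notin Wc e -> 1 < #|component e [set: T] v1| ->
  {in Wc e, forall w, kappa e [set: T] v1 w = kappa e [set: T] v2 w} -> v1 = v2.
Proof.
move=> v1W v2W gt1 h.
set C := component e [set: T] v1.
have Cc : C \in components e [set: T] by apply: imset_f.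
have [rB _] := basisP e C.
have BW : basis e C \subset Wc e.
  by apply/subsetP => x xB; apply/bigcupP; exists C => //; rewrite /fsel gt1.
have [sBC rBC] := (resolvingP _ _ _).1 rB.
have [b bB] : exists b, b \in basis e C.
  apply/card_gt0P; rewrite card_gt0; apply/negP => /eqP B0.
  move: gt1; rewrite ltnNge => /negP; apply; apply/card_le1_eqP => x y xC yC.
  by apply: rBC => //; rewrite B0 => w; rewrite inE.
have bW := subsetP BW _ bB; have bC := subsetP sBC _ bB.
have nb1 : v1 != b by apply: contraNneq v1W => ->.
have nb2 : v2 != b by apply: contraNneq v2W => ->.
have [k hk] := kappa_conn nb1 (etrans (esym (in_comp e v1 b)) bC).
have c2 : connect (adjV e [set: T]) v2 b.
  apply: contraTT isT => nc; move: (h b bW); rewrite hk kappa_disc //.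
have v2C : v2 \in C.
  have bv2 : b \in component e [set: T] v2 by rewrite in_comp.
  by rewrite /C -(comp_eq e_sym bC) (comp_eq e_sym bv2) comp_self.
have v1C : v1 \in C by apply: comp_self.
apply: rBC => // w wB.
rewrite !(kappa_closed (comps_closed Cc)) //.
exact: h (subsetP BW _ wB).
Qed.

Lemma Wc_resolving (T : finType) (e : rel T) (e_sym : symmetric e) :
  resolving e [set: T] (Wc e).
Proof.
apply/(proj2 (resolvingP _ _ _)); split; first exact: subsetT.
move=> v1 v2 _ _ h.
case: (boolP (v1 \in Wc e)) => v1W.
  by apply/eqP; rewrite eq_sym -(kappa_None e [set: T]) -h // kappa_None.
case: (boolP (v2 \in Wc e)) => v2W.
  by apply/eqP; rewrite -(kappa_None e [set: T] v1) h // kappa_None.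
case: (ltnP 1 #|component e [set: T] v1|) => g1.
  exact: Wc_key.
case: (ltnP 1 #|component e [set: T] v2|) => g2.
  by apply/esym/(Wc_key e_sym v2W v1W g2) => w wW; rewrite h.
have iso : forall v, v \notin Wc e -> (#|component e [set: T] v| <= 1) ->
    component e [set: T] v = C0 e /\ #|component e [set: T] v| = 1.
  move=> v vW g.
  have g0 : 0 < #|component e [set: T] v| by apply/card_gt0P; exists v; apply: comp_self.
  have c1 : #|component e [set: T] v| = 1 by apply/eqP; rewrite eqn_leq g g0.
  split => //; move: vW; rewrite in_Wc // /fsel c1 /=.
  by case: eqP => // _; rewrite comp_self.
have [E1 c1] := iso _ v1W g1; have [E2 _] := iso _ v2W g2.
have /cards1P [u Eu] := introT eqP c1.
have := comp_self e v1; have := comp_self e v2.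
by rewrite E2 -E1 Eu !inE => /eqP -> /eqP ->.
Qed.

Theorem mainTheorem1 (T : finType) (e : rel T)
    (e_sym : symmetric e) (e_irr : irreflexive e) (T_nonempty : 0 < #|T|) :
  cdim e [set: T] =
    (#|[set C in components e [set: T] | #|C| == 1]| - 1)
    + \sum_(C in components e [set: T] | 1 < #|C|) cdim e C.
Proof.
apply/eqP; rewrite eqn_leq; apply/andP; split.
  by rewrite -(card_Wc e_sym); apply: cdim_le; apply: Wc_resolving.
by have [W rW <-] := cdim_ex e [set: T]; apply: lower.
Qed.
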